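(* Let $s$ and $i$ be MIAs over $I$ and $O$ such that $i$ is input-enabled. If $i\ \mathbf{mioco}\ s$, then for every IOLTS state $i'$ with $i'\sqsubseteq_{\mathrm{var}} i$ there exists some $s'\sqsubseteq_{\mathrm{var}} s$ such that $i'\ \mathbf{ioco}\ s'$.
   Context: IOLTS: $(P,I,O,\longrightarrow)$ with countable state set $P$, disjoint $I$ (inputs), $O$ (outputs), $\longrightarrow\subseteq P\times(I\cup O)\times P$. For an IOLTS: $init(p)=\{\mu\mid p\overset{\mu}{\longrightarrow}\}$; $p$ quiescent, $\delta(p)$, iff $init(p)\subseteq I$; $\delta$ acts as a self-loop at quiescent states; $p\ \mathrm{after}\ \sigma=\{q\mid p\overset{\sigma}{\longrightarrow}q\}$ for $\sigma\in(I\cup O\cup\{\delta\})^*$; $Out(P)=\{\mu\in O\mid\exists p\in P:p\overset{\mu}{\longrightarrow}\}\cup\{\delta\mid\exists p\in P:\delta(p)\}$; $Straces(p)=\{\sigma\mid p\overset{\sigma}{\longrightarrow}\}$; $i\ \mathbf{ioco}\ s$ iff for all $\sigma\in Straces(s)$, $Out(i\ \mathrm{after}\ \sigma)\subseteq Out(s\ \mathrm{after}\ \sigma)$. A MIA over $I,O$ is $(Q,I,O,\longrightarrow_\Box,\longrightarrow_\Diamond)$ with finite $Q$, must/may relations $\subseteq Q\times(I\cup O)\times Q$, every must transition a may transition, must input transitions deterministic, every may input transition a must transition. Input-enabled: every state has a must transition for every input. MIA-refinement $\mathcal R$: for $(p,q)\in\mathcal R$, every must transition $q\overset{a}{\longrightarrow}_\Box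 q'$ is matched by $p\overset{a}{\longrightarrow}_\Box p'$ with $(p',q')\in\mathcal R$, and every output may transition $p\overset{\alpha}{\longrightarrow}_\Diamond p'$ ($\alpha\in O$) is matched by $q\overset{\alpha}{\longrightarrow}_\Diamond q'$ with $(p',q')\in\mathcal R$; $p\sqsubseteq q$ iff such $\mathcal R$ contains $(p,q)$. Variant: for an IOLTS $(P,I,O,\longrightarrow)$ and a MIA $Q$, $p\sqsubseteq_{\mathrm{var}}q$ iff $(P,I,O,\longrightarrow,\longrightarrow)$ MIA-refines $Q$ via some $\mathcal R\ni(p,q)$ and $\longrightarrow\subseteq\longrightarrow_\Diamond$. Modal notions for $\gamma\in\{\Box,\Diamond\}$: $init_\gamma(p)=\{\mu\mid p\overset{\mu}{\longrightarrow}_\gamma\}$; $\delta_\Diamond(p)$ iff $init_\Box(p)\subseteq I$; $\delta_\Box(p)$ iff $init_\Diamond(p)\subseteq I$; $\delta_\gamma$ acts as a $\gamma$-self-loop at $\delta_\gamma$-states; $p\ \mathrm{after}_\gamma\ \sigma$, $Out_\gamma$, $Straces_\gamma$ defined as in the IOLTS case using $\gamma$-transitions and $\delta_\gamma$. $i\ \mathbf{mioco}\ s$ (for input-enabled $i$) iff (1) for all $\sigma\in Straces_\Diamond(s)$: $Out_\Diamond(i\ \mathrm{after}_\Diamond\ \sigma)\subseteq Out_\Diamond(s\ \mathrm{after}_\Diamond\ \sigma)$, and (2) for all $\sigma\in Straces_\Box(i)$: $Out_\Box(s\ \mathrm{after}_\Box\ \sigma)\subseteq Out_\Box(i\ \mathrm{after}_\Box\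 \sigma)$. *)

(* Defs.v *)
From mathcomp Require Import all_boot.
Set Implicit Arguments. Unset Strict Implicit. Unset Printing Implicit Defensive.

(* Action alphabet: inputs I and outputs O, disjoint by construction (sum type).
   Transition labels are elements of I + O (inl = input, inr = output). *)
Definition act (I O : Type) := (I + O)%type.

Inductive slab (I O : Type) : Type :=
| SIn of I
| SOut of O
| SDelta.
Arguments SIn {I O} _.
Arguments SOut {I O} _.
Arguments SDelta {I O}.

Record IOLTS (I O : Type) : Type := {
  ist :> countType;
  trans : ist -> act I O -> ist -> Prop
}.

Record MIA (I O : Type) : Type := {
  mst :> finType;
  must : mst -> act I O -> mst -> Prop;
  may  : mst -> act I O -> mst -> Prop;
  must_may : forall p a p', must p a p' -> may p a p';
  must_in_det : forall p (a : I) p1 p2,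
      must p (inl a) p1 -> must p (inl a) p2 -> p1 = p2;
  may_in_must : forall p (a : I) p', may p (inl a) p' -> must p (inl a) p'
}.

Section Generic.
Variables (I O : Type) (S : Type).

Definition quiet (t : S -> act I O -> S -> Prop) (p : S) : Prop :=
  forall a p', t p a p' -> exists x, a = inl x.

Definition sstep (t : S -> act I O -> S -> Prop) (qu : S -> Prop)
    (p : S) (l : slab I O) (p' : S) : Prop :=
  match l with
  | SIn x => t p (inl x) p'
  | SOut o => t p (inr o) p'
  | SDelta => qu p /\ p' = p
  end.

Fixpoint after (t : S -> act I O -> S -> Prop) (qu : S -> Prop)
    (p : S) (sigma : seq (slab I O)) (p' : S) : Prop :=
  match sigma with
  | [::] => p' = p
  | l :: sigma' => exists p1, sstep t qu p l p1 /\ after t qu p1 sigma' p'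
  end.

Definition straces (t : S -> act I O -> S -> Prop) (qu : S -> Prop)
    (p : S) (sigma : seq (slab I O)) : Prop :=
  exists p', after t qu p sigma p'.

Definition outs (t : S -> act I O -> S -> Prop) (qu : S -> Prop)
    (X : S -> Prop) (l : slab I O) : Prop :=
  match l with
  | SIn _ => False
  | SOut o => exists p p', X p /\ t p (inr o) p'
  | SDelta => exists p, X p /\ qu p
  end.
End Generic.

Definition tDia {I O : Type} (M : MIA I O) : M -> act I O -> M -> Prop := @may _ _ M.
Definition qDia {I O : Type} (M : MIA I O) : M -> Prop := quiet (@must _ _ M).
Definition tBox {I O : Type} (M : MIA I O) : M -> act I O -> M -> Prop := @must _ _ M.
Definition qBox {I O : Type} (M : MIA I O) : M -> Prop := quiet (@may _ _ M).

Arguments tDia {I O} M _ _ _.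
Arguments qDia {I O} M _.
Arguments tBox {I O} M _ _ _.
Arguments qBox {I O} M _.

Section Relations.
Variables I O : Type.

Definition ioco (Li Ls : IOLTS I O) (i : Li) (s : Ls) : Prop :=
  forall sigma, straces (@trans _ _ Ls) (quiet (@trans _ _ Ls)) s sigma ->
  forall l,
    outs (@trans _ _ Li) (quiet (@trans _ _ Li))
         (after (@trans _ _ Li) (quiet (@trans _ _ Li)) i sigma) l ->
    outs (@trans _ _ Ls) (quiet (@trans _ _ Ls))
         (after (@trans _ _ Ls) (quiet (@trans _ _ Ls)) s sigma) l.

Definition input_enabled (M : MIA I O) : Prop :=
  forall (p : M) (a : I), exists p', must p (inl a) p'.

Definition mioco (Mi Ms : MIA I O) (i : Mi) (s : Ms) : Prop :=
  (forall sigma, straces (tDia Ms) (qDia Ms) s sigma ->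
     forall l, outs (tDia Mi) (qDia Mi) (after (tDia Mi) (qDia Mi) i sigma) l ->
               outs (tDia Ms) (qDia Ms) (after (tDia Ms) (qDia Ms) s sigma) l)
  /\
  (forall sigma, straces (tBox Mi) (qBox Mi) i sigma ->
     forall l, outs (tBox Ms) (qBox Ms) (after (tBox Ms) (qBox Ms) s sigma) l ->
               outs (tBox Mi) (qBox Mi) (after (tBox Mi) (qBox Mi) i sigma) l).

(* p [=_var q: the IOLTS, viewed with must = may = -->, MIA-refines M via a
   relation R containing (p, q), and (w.r.t. R) --> is included in -->_may. *)
Definition refines_var (L : IOLTS I O) (M : MIA I O) (p : L) (q : M) : Prop :=
  exists R : L -> M -> Prop,
    R p q /\
    forall (p0 : L) (q0 : M), R p0 q0 ->
      (forall a q', must q0 a q' -> exists p', trans p0 a p' /\ R p' q') /\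
      (forall (o : O) p', trans p0 (inr o) p' ->
          exists q', may q0 (inr o) q' /\ R p' q') /\
      (forall a p', trans p0 a p' -> exists q', may q0 a q' /\ R p' q').
End Relations.

(* Main.v *)
Require Import Defs.
From mathcomp Require Import all_boot.
From Stdlib Require Import Classical.

Section Aux.
Variables I O : Type.

Definition Lp (M : MIA I O) : IOLTS I O :=
  {| ist := (M * bool)%type;
     trans := fun (x : M * bool) a (y : M * bool) =>
        if x.2 then may x.1 a y.1 else must x.1 a y.1 |}.

Definition simcl (L : IOLTS I O) (M : MIA I O) (R : L -> M -> Prop) :=
  forall (p0 : L) (q0 : M), R p0 q0 ->
      (forall a q', must q0 a q' -> exists p', trans p0 a p' /\ R p' q') /\
      (forall (o : O) p', trans p0 (inr o) p' ->
          exists q', may q0 (inr o) q' /\ R p' q') /\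
      (forall a p', trans p0 a p' -> exists q', may q0 a q' /\ R p' q').

Arguments simcl : clear implicits.
Lemma quiet_sim (L : IOLTS I O) (M : MIA I O) (R : L -> M -> Prop) (HR : simcl L M R) p q :
  R p q -> quiet (@trans _ _ L) p -> qDia M q.
Proof.
move=> Rpq Hq a q' Hm; have [H1 _] := HR _ _ Rpq.
have [p' [Ht _]] := H1 _ _ Hm; exact: Hq Ht.
Qed.

Lemma simA (L : IOLTS I O) (M : MIA I O) (R : L -> M -> Prop) (HR : simcl L M R) sigma :
  forall (x : L) (q : M) p, R x q ->
  after (@trans _ _ L) (quiet (@trans _ _ L)) x sigma p ->
  exists q', after (tDia M) (qDia M) q sigma q' /\ R p q'.
Proof.
elim: sigma => [|l sigma IH] x q p Rxq /=.
  by move=> ->; exists q.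
move=> [x1 [Hs Ha]].
have [H1 [H2 H3]] := HR _ _ Rxq.
case: l Hs => [a|o|] /= Hs.
- have [q1 [Hm R1]] := H3 _ _ Hs.
  have [q' [Ha' R']] := IH _ _ _ R1 Ha.
  by exists q'; split => //; exists q1.
- have [q1 [Hm R1]] := H3 _ _ Hs.
  have [q' [Ha' R']] := IH _ _ _ R1 Ha.
  by exists q'; split => //; exists q1.
- case: Hs => Hq Ex; subst x1.
  have [q' [Ha' R']] := IH _ _ _ Rxq Ha.
  exists q'; split => //; exists q; split => //; split => //.
  exact: (@quiet_sim L M R HR x q Rxq Hq).
Qed.

Lemma simB (M : MIA I O) sigma : forall (x y : Lp M),
  after (@trans _ _ (Lp M)) (quiet (@trans _ _ (Lp M))) x sigma y ->
  after (tDia M) (qDia M) x.1 sigma y.1.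
Proof.
elim: sigma => [|l sigma IH] x y /=.
  by move=> ->.
move=> [x1 [Hs Ha]]; exists x1.1; split; last exact: IH.
case: l Hs => [a|o|] /= Hs.
- by case: (x.2) Hs => // /must_may.
- by case: (x.2) Hs => // /must_may.
- case: Hs => Hq ->; split => //.
  move=> a q' Hm; apply: (Hq a (q', x.2)) => /=.
  by case: (x.2) => //; apply: must_may.
Qed.

Definition req (sigma : seq (slab I O)) (l : slab I O) : bool :=
  match sigma with
  | [::] => if l is SOut _ then true else false
  | SOut _ :: _ => true
  | SDelta :: _ => false
  | SIn _ :: _ => true
  end.

Definition startok (sigma : seq (slab I O)) l (b : bool) : Prop :=
  match sigma with
  | SIn _ :: _ => True
  | _ => b = req sigma l
  end.

Fixpoint okd (sigma : seq (slab I O)) (l : slab I O) : Prop :=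
  match sigma with
  | [::] => True
  | SDelta :: s' => startok s' l false /\ okd s' l
  | _ :: s' => okd s' l
  end.

Definition outcond (M : MIA I O) (q : M) (l : slab I O) : Prop :=
  match l with
  | SIn _ => False
  | SOut o => exists q', may q (inr o) q'
  | SDelta => qDia M q
  end.

Lemma startok_req sigma l : startok sigma l (req sigma l).
Proof. by case: sigma => [|[]]. Qed.

Lemma outs_mono S (t : S -> act I O -> S -> Prop) qu (X Y : S -> Prop) l :
  (forall y, X y -> Y y) -> outs t qu X l -> outs t qu Y l.
Proof.
move=> XY; case: l => //= [o [p [p' [Hp Ht]]]|[p [Hp Hq]]].
  by exists p, p'; split => //; apply: XY.
by exists p; split => //; apply: XY.
Qed.

Lemma simC (M : MIA I O) sigma l : forall (q0 q : M) (b0 : bool),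
  after (tDia M) (qDia M) q0 sigma q -> outcond M q l ->
  startok sigma l b0 -> okd sigma l ->
  outs (@trans _ _ (Lp M)) (quiet (@trans _ _ (Lp M)))
       (after (@trans _ _ (Lp M)) (quiet (@trans _ _ (Lp M))) ((q0, b0) : Lp M) sigma) l.
Proof.
elim: sigma => [|x sigma IH] q0 q b0 /=.
  move=> -> ; case: l => [a|o|] //=.
    move=> [q' Hm] ->; by exists (q0, true), (q', true); split.
  move=> Hq ->; exists (q0, false); split => //.
  by move=> a y /= Hm; exact: Hq Hm.
move=> [q1 [Hs Ha]] Hc.
case: x Hs => [a|o|] /= Hs Hst.
- move=> Hok.
  have := IH q1 q (req sigma l) Ha Hc (startok_req _ _) Hok.
  apply: outs_mono => y Hy; exists (q1, req sigma l); split => //=.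
  by case: b0 {Hst} => //=; apply: may_in_must.
- move=> Hok; subst b0.
  have := IH q1 q (req sigma l) Ha Hc (startok_req _ _) Hok.
  apply: outs_mono => y Hy; by exists (q1, req sigma l); split.
- move=> [Hs' Hok]; subst b0; case: Hs => Hq Eq; subst q1.
  have := IH q0 q false Ha Hc Hs' Hok.
  apply: outs_mono => y Hy; exists (q0, false); split => //; split => //.
  by move=> a' y' /= Hm; exact: Hq Hm.
Qed.

Lemma okdL (L : IOLTS I O) sigma : forall (x p : L) l,
  after (@trans _ _ L) (quiet (@trans _ _ L)) x sigma p ->
  outs (@trans _ _ L) (quiet (@trans _ _ L)) (fun y => y = p) l ->
  okd sigma l.
Proof.
elim: sigma => [|y sigma IH] x p l //=.
move=> [x1 [Hs Ha]] Ho.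
have Hrec := IH _ _ _ Ha Ho.
case: y Hs => // [[Hq E]]; subst x1; split => //.
case: sigma Ha Ho {Hrec IH} => [|[a|o|] sigma] /=.
- move=> ->; case: l => //= o [p0 [p' [E Ht]]]; subst p0.
  by have [? ] := Hq _ _ Ht.
- done.
- move=> [x2 [Ht _]]; by have [?] := Hq _ _ Ht.
- done.
Qed.
Lemma startokL (L : IOLTS I O) sigma (x p : L) l (b0 : bool) :
  after (@trans _ _ L) (quiet (@trans _ _ L)) x sigma p ->
  outs (@trans _ _ L) (quiet (@trans _ _ L)) (fun y => y = p) l ->
  (b0 = true <-> ~ quiet (@trans _ _ L) x) ->
  startok sigma l b0.
Proof.
move=> Ha Ho Hb.
case: sigma Ha => [|[a|o|] sigma] /=.
- move=> E; subst p; case: l Ho => //= [o [p0 [p' [E Ht]]]|[p0 [E Hq]]]; subst p0.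
  + apply/Hb => Hq; by have [?] := Hq _ _ Ht.
  + case: b0 Hb => // Hb; by case: (proj1 Hb erefl).
- done.
- move=> [x1 [Ht _]]; apply/Hb => Hq; by have [?] := Hq _ _ Ht.
- move=> [x1 [[Hq _] _]]; case: b0 Hb => // Hb; by case: (proj1 Hb erefl).
Qed.
End Aux.

Theorem theorem1 (I O : Type) (Ms Mi : MIA I O) (s : Ms) (i : Mi) :
  input_enabled Mi ->
  mioco i s ->
  forall (L : IOLTS I O) (i' : L), refines_var i' i ->
  exists (L' : IOLTS I O) (s' : L'), refines_var s' s /\ ioco i' s'.
Proof.
move=> _ [Hm1 _] L i' [R [Ri HR]].
have main : forall b0 : bool, (b0 = true <-> ~ quiet (@trans _ _ L) i') ->
    exists (L' : IOLTS I O) (s' : L'), refines_var s' s /\ ioco i' s'.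
  move=> b0 Hb; exists (Lp _ _ Ms), ((s, b0) : Lp _ _ Ms); split.
    exists (fun (x : Lp _ _ Ms) q => x.1 = q); split => // p0 q0 /= E; subst q0.
    split; last split.
    - move=> a q' Hm; exists (q', p0.2); split => //=.
      by case: (p0.2) => //; apply: must_may.
    - move=> o p' /= Ht; exists p'.1; split => //.
      by case: (p0.2) Ht => // /must_may.
    - move=> a p' /= Ht; exists p'.1; split => //.
      by case: (p0.2) Ht => // /must_may.
  move=> sigma [y Hy] l Ho.
  have [p [Hp Hop]] : exists p, after (@trans _ _ L) (quiet (@trans _ _ L)) i' sigma p /\
      outs (@trans _ _ L) (quiet (@trans _ _ L)) (fun z => z = p) l.
    case: l Ho => //= [o [p [p' [Hp Ht]]]|[p [Hp Hq]]].
      by exists p; split => //; exists p, p'.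
    by exists p; split => //; exists p.
  have [q [Hq Rpq]] := @simA _ _ L Mi R HR sigma i' i p Ri Hp.
  have Hoi : outs (tDia Mi) (qDia Mi) (after (tDia Mi) (qDia Mi) i sigma) l.
    case: l Hop {Ho} => //= [o [p0 [p' [E Ht]]]|[p0 [E Hqu]]]; subst p0.
      have [_ [H2 _]] := HR _ _ Rpq.
      have [q' [Hm _]] := H2 _ _ Ht.
      by exists q, q'.
    exists q; split => //; exact: (@quiet_sim _ _ L Mi R HR p q Rpq Hqu).
  have Hst : straces (tDia Ms) (qDia Ms) s sigma.
    by exists y.1; exact: (@simB _ _ Ms sigma ((s, b0) : Lp _ _ Ms) y Hy).
  have := Hm1 sigma Hst l Hoi.
  have Hok := @okdL _ _ L sigma i' p l Hp Hop.
  have Hs0 := @startokL _ _ L sigma i' p l b0 Hp Hop Hb.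
  case: l {Ho Hoi} Hop Hok Hs0 => //= [o|] _ Hok Hs0.
    move=> [qs [q' [Hqs Hm]]].
    apply: (@simC _ _ Ms sigma (SOut o) s qs b0 Hqs) => //=; by exists q'.
  move=> [qs [Hqs Hqu]].
  exact: (@simC _ _ Ms sigma SDelta s qs b0 Hqs).
case: (classic (quiet (@trans _ _ L) i')) => Hq.
  by apply: (main false); split.
by apply: (main true); split.
Qed.
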